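(* Let $R$ be a UFD with fraction field $K$, let $A(X), B(X)\in R[X]$ with $A(0)=B(0)=0$, and let $b\in R\setminus\{0\}$ with $\gcd(B,b)=1$. If $A\!\left(\frac{B(X)}{b}\right)\in R[X]$, then there exists $C(X)\in R[X]$ with $A(X)=C(bX)$; equivalently, for every $k\ge1$ the coefficient of $X^k$ in $A(X)$ is divisible by $b^k$.
   Context: For a polynomial $P\in R[X]$ and $c\in R$, $\gcd(P,c)=1$ means that no prime element of $R$ divides both $c$ and all coefficients of $P$. *)

(* Defs.v *)
From HB Require Import structures.
From mathcomp Require Import all_boot all_order all_algebra.
Set Implicit Arguments. Unset Strict Implicit. Unset Printing Implicit Defensive.
Import Order.TTheory GRing.Theory Num.Theory.
Local Open Scope ring_scope.

Section UFDDefs.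
Variable R : idomainType.

Definition dvdR (a b : R) : Prop := exists c : R, b = c * a.

Definition associated (a b : R) : Prop :=
  exists u : R, u \is a GRing.unit /\ b = u * a.

Definition irreducibleR (a : R) : Prop :=
  a != 0 /\ a \isn't a GRing.unit /\
  forall x y : R, a = x * y -> x \is a GRing.unit \/ y \is a GRing.unit.

Definition primeR (p : R) : Prop :=
  p != 0 /\ p \isn't a GRing.unit /\
  forall a b : R, dvdR p (a * b) -> dvdR p a \/ dvdR p b.

Definition is_UFD : Prop :=
  (forall a : R, a != 0 -> a \isn't a GRing.unit ->
     exists s : seq R, (forall x, x \in s -> irreducibleR x) /\
                       a = \prod_(x <- s) x) /\
  (forall s t : seq R,
     (forall x, x \in s -> irreducibleR x) ->
     (forall x, x \in t -> irreducibleR x) ->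
     associated (\prod_(x <- s) x) (\prod_(x <- t) x) ->
     exists t' : seq R, perm_eq t t' /\ size s = size t' /\
       forall i, (i < size s)%N -> associated (nth 0 s i) (nth 0 t' i)).

(* gcd(P, c) = 1 : no prime element divides c and all coefficients of P *)
Definition poly_const_coprime (P : {poly R}) (c : R) : Prop :=
  forall p : R, primeR p -> dvdR p c -> (forall i, dvdR p P`_i) -> False.

End UFDDefs.

(* Main.v *)
Require Import Defs.
From HB Require Import structures.
From mathcomp Require Import all_boot all_order all_algebra.
From Stdlib Require Import Classical ClassicalEpsilon.
Set Implicit Arguments. Unset Strict Implicit. Unset Printing Implicit Defensive.
Import Order.TTheory GRing.Theory Num.Theory.
Local Open Scope ring_scope.

Section Helpers.
Variable R : idomainType.
Implicit Types (d x y : R) (P Q C : {poly R}).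

Definition dvdP d P := forall i, dvdR d P`_i.

Lemma dvdR0 d : dvdR d 0. Proof. by exists 0; rewrite mul0r. Qed.
Lemma dvdRD d x y : dvdR d x -> dvdR d y -> dvdR d (x + y).
Proof. by move=> [c1 ->] [c2 ->]; exists (c1 + c2); rewrite mulrDl. Qed.
Lemma dvdRN d x : dvdR d x -> dvdR d (- x).
Proof. by move=> [c ->]; exists (- c); rewrite mulNr. Qed.
Lemma dvdRMl d x y : dvdR d x -> dvdR d (y * x).
Proof. by move=> [c ->]; exists (y * c); rewrite mulrA. Qed.
Lemma dvdRMr d x y : dvdR d x -> dvdR d (x * y).
Proof. by move=> h; rewrite mulrC; apply: dvdRMl. Qed.
Lemma dvdR_trans d e x : dvdR d e -> dvdR e x -> dvdR d x.
Proof. by move=> [c ->] [c' ->]; exists (c' * c); rewrite mulrA. Qed.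
Lemma dvdR_sum d I (r : seq I) (F : I -> R) :
  (forall i, dvdR d (F i)) -> dvdR d (\sum_(i <- r) F i).
Proof. move=> h; apply: (big_ind (dvdR d)) => //; [exact: dvdR0 | exact: dvdRD]. Qed.

Lemma dvdP0 d : dvdP d 0. Proof. by move=> i; rewrite coef0; apply: dvdR0. Qed.
Lemma dvdPD d P Q : dvdP d P -> dvdP d Q -> dvdP d (P + Q).
Proof. by move=> h1 h2 i; rewrite coefD; apply: dvdRD. Qed.
Lemma dvdPN d P : dvdP d P -> dvdP d (- P).
Proof. by move=> h i; rewrite coefN; apply: dvdRN. Qed.
Lemma dvdPB d P Q : dvdP d P -> dvdP d Q -> dvdP d (P - Q).
Proof. by move=> h1 h2; apply: dvdPD => //; apply: dvdPN. Qed.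
Lemma dvdPMl d P Q : dvdP d P -> dvdP d (Q * P).
Proof.
move=> h i; rewrite coefM; apply: dvdR_sum => j; exact: dvdRMl.
Qed.
Lemma dvdPMr d P Q : dvdP d P -> dvdP d (P * Q).
Proof. by move=> h; rewrite mulrC; apply: dvdPMl. Qed.
Lemma dvdPZ d c P : dvdP d P -> dvdP d (c *: P).
Proof. by move=> h i; rewrite coefZ; apply: dvdRMl. Qed.
Lemma dvdP_sum d I (r : seq I) (F : I -> {poly R}) :
  (forall i, dvdP d (F i)) -> dvdP d (\sum_(i <- r) F i).
Proof. move=> h; apply: (big_ind (dvdP d)) => //; [exact: dvdP0 | exact: dvdPD]. Qed.

Lemma dvdP_comp d D B : dvdP d D -> dvdP d (D \Po B).
Proof.
move=> h; rewrite comp_polyE; apply: dvdP_sum => j i; rewrite coefZ.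
exact: dvdRMr.
Qed.

Lemma dvdP_expB d B B1 j : dvdP d (B - B1) -> dvdP d (B ^+ j - B1 ^+ j).
Proof.
move=> h; elim: j => [|j IH]; first by rewrite !expr0 subrr; apply: dvdP0.
have -> : B ^+ j.+1 - B1 ^+ j.+1 = (B - B1) * B ^+ j + B1 * (B ^+ j - B1 ^+ j).
  by rewrite !exprS mulrBl mulrBr addrA subrK.
apply: dvdPD; [exact: dvdPMr | exact: dvdPMl].
Qed.

Lemma dvdP_compB d B B1 C : dvdP d (B - B1) -> dvdP d ((C \Po B) - (C \Po B1)).
Proof.
move=> h; rewrite !comp_polyE.
apply: (@big_ind2 _ _ (fun X Y : {poly R} => dvdP d (X - Y)) 0 +%R 0 +%R).
- by rewrite subrr; apply: dvdP0.
- move=> x1 x2 y1 y2 h1 h2.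
  have -> : x1 + y1 - (x2 + y2) = (x1 - x2) + (y1 - y2).
    by rewrite opprD addrACA.
  exact: dvdPD.
- move=> j _; rewrite -scalerBr; apply: dvdPZ; exact: dvdP_expB.
Qed.


Lemma dvdR_prime_exp p x n : primeR p -> dvdR p (x ^+ n) -> dvdR p x.
Proof.
move=> [hp0 [hpu hp]]; elim: n => [|n IH].
  rewrite expr0 => -[c hc]; exfalso; move/negP: hpu; apply.
  by apply/unitrPr; exists c; rewrite mulrC hc.
by rewrite exprS => /hp [//|]; apply: IH.
Qed.

Lemma dvdP_take d C : dvdR d (lead_coef C) -> dvdP d (C - take_poly (size C).-1 C).
Proof.
move=> h i; rewrite coefB coef_take_poly.
case: ltnP => hi; first by rewrite subrr; apply: dvdR0.
rewrite subr0; case: (eqVneq i (size C).-1) => [->|hne]; first by rewrite -lead_coefE.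
rewrite nth_default; first exact: dvdR0.
have : ((size C).-1 < i)%N by rewrite ltn_neqAle eq_sym hne hi.
by apply: leq_trans; apply: leqSpred.
Qed.

Lemma trunc_exists p B : primeR p -> ~ dvdP p B ->
  exists B1, dvdP p (B - B1) /\ ~ dvdR p (lead_coef B1).
Proof.
move=> hp; move: {2}(size B) (leqnn (size B)) => n; elim: n B => [|n IH] B hs hB.
  exfalso; apply: hB; have -> : B = 0 by apply/eqP; rewrite -size_poly_eq0 -leqn0.
  exact: dvdP0.
case: (classic (dvdR p (lead_coef B))) => hl; last first.
  by exists B; split => //; rewrite subrr; apply: dvdP0.
have hT := dvdP_take hl.
have hB' : ~ dvdP p (take_poly (size B).-1 B).
  move=> h; apply: hB; have -> : B = take_poly (size B).-1 B + (B - take_poly (size B).-1 B)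
    by rewrite addrC subrK.
  exact: dvdPD.
have hs' : (size (take_poly (size B).-1 B) <= n)%N.
  apply: (leq_trans (size_take_poly _ _)); by case: (size B) hs.
have [B1 [h1 h2]] := IH _ hs' hB'.
exists B1; split => //.
have -> : B - B1 = (B - take_poly (size B).-1 B) + (take_poly (size B).-1 B - B1)
  by rewrite addrA subrK.
exact: dvdPD.
Qed.

End Helpers.
Section Helpers2.
Variable R : idomainType.
Implicit Types (d x y : R) (P Q C : {poly R}).

Lemma lemM (p : R) (B : {poly R}) : primeR p -> B`_0 = 0 -> ~ dvdP p B ->
  forall C, dvdP p (C \Po B) -> dvdP p C.
Proof.
move=> hp hB0 hB.
have [B1 [h1 h2]] := trunc_exists hp hB.
have hsz : (1 < size B1)%N.
  rewrite ltnNge; apply/negP => hs; apply: h2.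
  rewrite lead_coefE; have -> : (size B1).-1 = 0%N by case: (size B1) hs => [|[]].
  have := h1 0%N; rewrite coefB hB0 sub0r => /dvdRN; by rewrite opprK.
move=> C; move: {2}(size C) (leqnn (size C)) => n; elim: n C => [|n IH] C hs hC.
  have -> : C = 0 by apply/eqP; rewrite -size_poly_eq0 -leqn0.
  exact: dvdP0.
have hCB1 : dvdP p (C \Po B1).
  have -> : C \Po B1 = (C \Po B) - ((C \Po B) - (C \Po B1)) by rewrite opprB addrC subrK.
  by apply: dvdPB => //; apply: dvdP_compB.
have hl : dvdR p (lead_coef C).
  have := hCB1 (size (C \Po B1)).-1; rewrite -lead_coefE lead_coef_comp //.
  case: hp => [hp0 [hpu hpm]] /hpm [//|] /(dvdR_prime_exp (conj hp0 (conj hpu hpm))).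
  by move=> /h2.
have hT := dvdP_take hl.
have hC' : dvdP p (take_poly (size C).-1 C).
  apply: IH; first by apply: (leq_trans (size_take_poly _ _)); case: (size C) hs.
  have -> : take_poly (size C).-1 C \Po B
      = (C \Po B) - ((C - take_poly (size C).-1 C) \Po B) by rewrite comp_polyB opprB addrC subrK.
  by apply: dvdPB => //; apply: dvdP_comp.
have -> : C = take_poly (size C).-1 C + (C - take_poly (size C).-1 C) by rewrite addrC subrK.
exact: dvdPD.
Qed.

Lemma dvdP_scale d C : dvdP d C -> exists C', C = d *: C'.
Proof.
move=> h.
pose f i := proj1_sig (constructive_indefinite_description _ (h i)).
have hf i : C`_i = f i * d := proj2_sig (constructive_indefinite_description _ (h i)).
exists (\poly_(i < size C) f i); apply/polyP => i; rewrite coefZ coef_poly.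
case: ltnP => hi; first by rewrite hf mulrC.
by rewrite mulr0 nth_default.
Qed.

Lemma lemG (B : {poly R}) (s : seq R) : B`_0 = 0 ->
  (forall q, q \in s -> primeR q /\ ~ dvdP q B) ->
  forall C, dvdP (\prod_(q <- s) q) (C \Po B) -> dvdP (\prod_(q <- s) q) C.
Proof.
move=> hB0; elim: s => [|p s IH] hs C.
  by move=> _ i; rewrite big_nil; exists C`_i; rewrite mulr1.
rewrite big_cons => h.
have [hp hpB] := hs p (mem_head _ _).
have hpC : dvdP p C.
  apply: (lemM hp hB0 hpB) => i; apply: (dvdR_trans _ (h i)).
  by exists (\prod_(q <- s) q); rewrite mulrC.
have [C' hC'] := dvdP_scale hpC.
have hp0 : p != 0 by case: hp.
have hC'B : dvdP (\prod_(q <- s) q) (C' \Po B).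
  move=> i; have [c hc] := h i; exists c.
  move: hc; rewrite hC' comp_polyZ coefZ mulrCA; exact: mulfI.
have := IH (fun q hq => hs q ltac:(by rewrite in_cons hq orbT)) _ hC'B.
move=> hh i; rewrite hC' coefZ; have [c hc] := hh i; exists c.
by rewrite hc mulrCA.
Qed.

End Helpers2.
Lemma comp_polyE_wide (R : nzRingType) n (p q : {poly R}) : (size p <= n)%N ->
  p \Po q = \sum_(i < n) p`_i *: q ^+ i.
Proof.
move=> hn; rewrite comp_polyE (big_ord_widen n (fun i => p`_i *: q ^+ i) hn).
rewrite big_mkcond /=; apply: eq_bigr => i _; case: ifP => // /negbT.
by rewrite -leqNgt => h; rewrite nth_default // scale0r.
Qed.

Section Helpers3.
Variable R : idomainType.
Hypothesis hR : is_UFD R.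

Lemma factor_unit (x : R) : x != 0 -> exists (s : seq R) (u : R),
  (forall y, y \in s -> irreducibleR y) /\ u \is a GRing.unit /\ x = u * \prod_(y <- s) y.
Proof.
move=> hx; case: (boolP (x \is a GRing.unit)) => hu.
  by exists [::], x; split => //; split => //; rewrite big_nil mulr1.
have [s [hs ->]] := hR.1 x hx hu.
by exists s, 1; split => //; split; [exact: unitr1 | rewrite mul1r].
Qed.

Lemma dvdR_prod (x : R) (s : seq R) : x \in s -> dvdR x (\prod_(y <- s) y).
Proof. by move=> hx; rewrite (big_rem x hx) /=; exists (\prod_(y <- rem x s) y); rewrite mulrC. Qed.

Lemma irr_prime (q : R) : irreducibleR q -> primeR q.
Proof.
move=> hirr; have [hq0 [hqu _]] := hirr; split => //; split => //.
move=> a c [t ht].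
case: (eqVneq a 0) => [->|ha]; first by left; apply: dvdR0.
case: (eqVneq c 0) => [->|hc]; first by right; apply: dvdR0.
case: (boolP (a \is a GRing.unit)) => hau.
  by right; exists (a^-1 * t); rewrite -mulrA -ht mulKr.
case: (boolP (c \is a GRing.unit)) => hcu.
  by left; exists (t * c^-1); rewrite mulrAC -ht mulrK.
have ht0 : t != 0.
  by apply/eqP => ht0; move: ht; rewrite ht0 mul0r => /eqP; rewrite mulf_eq0 (negbTE ha) (negbTE hc).
have [st [u [hst [hu htu]]]] := factor_unit ht0.
have [sa [hsa ea]] := hR.1 a ha hau.
have [sc [hsc ec]] := hR.1 c hc hcu.
have hirr1 : forall y, y \in q :: st -> irreducibleR y.
  by move=> y; rewrite in_cons => /orP [/eqP ->|]; [exact: hirr | exact: hst].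
have hirr2 : forall y, y \in sa ++ sc -> irreducibleR y.
  by move=> y; rewrite mem_cat => /orP [|]; [exact: hsa | exact: hsc].
have hass : associated (\prod_(y <- q :: st) y) (\prod_(y <- sa ++ sc) y).
  exists u; split => //; rewrite big_cat big_cons /= -ea -ec ht htu.
  by rewrite -mulrA [q * _]mulrC.
have [t' [hperm [hsize hassoc]]] := hR.2 _ _ hirr1 hirr2 hass.
have [v [hv hx]] := hassoc 0%N isT.
have hmem : nth 0 t' 0 \in sa ++ sc.
  by rewrite (perm_mem hperm) mem_nth // -hsize.
have hqx : dvdR q (nth 0 t' 0) by exists v; rewrite hx.
move: hmem; rewrite mem_cat => /orP [h|h].
  by left; apply: (dvdR_trans hqx); rewrite ea; apply: dvdR_prod.
by right; apply: (dvdR_trans hqx); rewrite ec; apply: dvdR_prod.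
Qed.

End Helpers3.
Theorem mainTheorem2 (R : idomainType) (hR : is_UFD R)
    (A B : {poly R}) (b : R)
    (hA0 : A.[0] = 0) (hB0 : B.[0] = 0)
    (hb : b != 0) (hBb : poly_const_coprime B b)
    (hint : exists Q : {poly R},
        map_poly (@tofrac R) Q =
        map_poly (@tofrac R) A \Po ((@tofrac R b)^-1 *: map_poly (@tofrac R) B)) :
  (exists C : {poly R}, A = C \Po (b *: 'X)) /\
  (forall k : nat, (1 <= k)%N -> dvdR (b ^+ k) A`_k).
Proof.
have [Q hQ] := hint.
rewrite horner_coef0 in hB0.
set n := size A.
set C := \poly_(i < n) (A`_i * b ^+ (n - i)).
have hinj : injective (@tofrac R).
  by move=> x y /eqP; rewrite tofrac_eq => /eqP.
have hbF : (@tofrac R b) != 0 by rewrite tofrac_eq0.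
have hCB : C \Po B = b ^+ n *: Q.
  apply: (map_inj_poly hinj (rmorph0 _)).
  rewrite map_comp_poly map_polyZ hQ.
  rewrite (comp_polyE_wide _ (n := n)); last first.
    by rewrite size_map_inj_poly ?rmorph0 // size_poly.
  rewrite (comp_polyE_wide _ (n := n)); last first.
    by rewrite size_map_inj_poly ?rmorph0.
  rewrite scaler_sumr; apply: eq_bigr => i _.
  rewrite exprZn !scalerA !coef_map /= coef_poly ltn_ord.
  congr (_ *: _).
  rewrite !rmorphM !rmorphXn /= [_ * tofrac A`_i]mulrC -mulrA; congr (_ * _).
  rewrite (_ : tofrac b ^+ n = tofrac b ^+ (n - i) * tofrac b ^+ i); last first.
    by rewrite -exprD subnK // ltnW.
  by rewrite -mulrA exprVn mulfV ?mulr1 // expf_neq0.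
have hbn : b ^+ n != 0 by rewrite expf_neq0.
have [s [u [hs [hu hbu]]]] := factor_unit hR hbn.
have hsp : forall q, q \in s -> primeR q /\ ~ dvdP q B.
  move=> q hq; have hqp := irr_prime hR (hs q hq); split => // hqB.
  apply: (hBb q hqp) => //.
  apply: (dvdR_prime_exp (n := n) hqp).
  apply: (dvdR_trans (dvdR_prod hq)); exists u; exact: hbu.
have key : dvdP (\prod_(y <- s) y) C.
  apply: (lemG hB0 hsp); rewrite hCB => i; rewrite coefZ hbu.
  by exists (u * Q`_i); rewrite mulrAC.
have hk : forall k, dvdR (b ^+ k) A`_k.
  move=> k; case: (ltnP k n) => hkn; last by rewrite nth_default //; apply: dvdR0.
  have [c hc] := key k; move: hc; rewrite coef_poly hkn.
  have -> : \prod_(y <- s) y = u^-1 * b ^+ n by rewrite hbu mulKr.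
  move=> hc; have e : b ^+ n = b ^+ k * b ^+ (n - k) by rewrite -exprD subnKC // ltnW.
  rewrite e in hc; exists (c * u^-1); apply: (mulIf (expf_neq0 (n - k) hb)).
  by rewrite hc !mulrA.
split; last by move=> k _; apply: hk.
pose f i := proj1_sig (constructive_indefinite_description _ (hk i)).
have hf i : A`_i = f i * b ^+ i := proj2_sig (constructive_indefinite_description _ (hk i)).
exists (\poly_(i < n) f i).
rewrite (comp_polyE_wide _ (n := n)); last exact: size_poly.
have -> : \sum_(i < n) (\poly_(i0 < n) f i0)`_i *: (b *: 'X) ^+ i
    = \poly_(i < n) (f i * b ^+ i).
  rewrite [RHS]poly_def; apply: eq_bigr => i _.
  by rewrite coef_poly ltn_ord exprZn scalerA.
apply/polyP => i; rewrite coef_poly; case: ltnP => hi; first by rewrite hf.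
by rewrite nth_default.
Qed.
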